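(* Let $\mathcal{Q}$ be a parabolic subset of $\mathcal{R}$, $\mathrm{s}$ an involution of $\mathcal{R}$, and $C$ a $V$-fit Weyl chamber for $(\mathcal{Q},\mathrm{s})$, with $\Phi_C=\mathcal{B}(C)\cap\mathcal{Q}^n$. The following are equivalent: (1) $\mathcal{Q}\cup\mathrm{s}(\mathcal{Q})=\mathcal{R}$ (i.e. $(\mathcal{Q},\mathrm{s})$ is totally complex); (2) $\mathrm{s}(\mathcal{Q}^n)\subseteq\mathcal{R}^-(C)$; (3) $\mathrm{s}(\Phi_C)\subseteq\mathcal{R}^-(C)$.
   Context: $\mathcal{R}$ is a reduced root system in a Euclidean space $V$. Closed subset: $\alpha,\beta\in\mathcal{Q}$, $\alpha+\beta\in\mathcal{R}\Rightarrow\alpha+\beta\in\mathcal{Q}$; parabolic: closed with $\mathcal{Q}\cup(-\mathcal{Q})=\mathcal{R}$. $\mathcal{Q}^n=\{\alpha\in\mathcal{Q}\mid-\alpha\notin\mathcal{Q}\}$. For a Weyl chamber $C$: $\mathcal{R}^\pm(C)$ positive/negative roots, $\mathcal{B}(C)$ simple roots. $C$ is admissible for $\mathcal{Q}$ if $\mathcal{R}^+(C)\subseteq\mathcal{Q}$. An involution of $\mathcal{R}$ is a linear isometric involution $\mathrm{s}$ of $V$ with $\mathrm{s}(\mathcal{R})=\mathcal{R}$; a root $\alpha$ is real if $\mathrm{s}(\alpha)=\alpha$, imaginary if $\mathrm{s}(\alpha)=-\alpha$, complex otherwise. An admissible chamber $C$ is $V$-fit for $(\mathcal{Q},\mathrm{s})$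 if $\mathrm{s}(\alpha)\in\mathcal{R}^-(C)$ for every complex $\alpha\in\mathcal{B}(C)\setminus\Phi_C$. *)

(* Defs.v *)
From HB Require Import structures.
From mathcomp Require Import all_boot all_order all_algebra.
From mathcomp Require Import reals.
Set Implicit Arguments. Unset Strict Implicit. Unset Printing Implicit Defensive.
Import Order.TTheory GRing.Theory Num.Theory.
Local Open Scope ring_scope.

Section RootSystems.
Variables (R : realType) (n : nat).
Notation V := 'rV[R]_n.

Definition dot (u v : V) : R := (u *m v^T) 0 0.

Definition refl (a v : V) : V := v - ((2 * dot v a) / dot a a) *: a.

Definition root_system (Rs : seq V) : Prop :=
  [/\ row_full (\matrix_(i < size Rs) nth 0 Rs i),
      (0 : V) \notin Rs,
      (forall a b, a \in Rs -> b \in Rs -> refl a b \in Rs) &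
      (forall a b, a \in Rs -> b \in Rs ->
         exists k : int, (2 * dot b a) / dot a a = k%:~R)].

Definition reduced (Rs : seq V) : Prop :=
  forall (a : V) (c : R), a \in Rs -> c *: a \in Rs -> c = 1 \/ c = -1.

Definition closed_subset (Rs : seq V) (Q : V -> Prop) : Prop :=
  (forall a, Q a -> a \in Rs) /\
  (forall a b, Q a -> Q b -> a + b \in Rs -> Q (a + b)).

Definition parabolic (Rs : seq V) (Q : V -> Prop) : Prop :=
  closed_subset Rs Q /\ (forall a, a \in Rs -> Q a \/ Q (- a)).

Definition Qn (Q : V -> Prop) (a : V) : Prop := Q a /\ ~ Q (- a).

(* an involution of Rs: linear isometric involution of V (acting on row
   vectors by v |-> v *m S) preserving Rs *)
Definition root_involution (Rs : seq V) (S : 'M[R]_n) : Prop :=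
  [/\ S *m S = 1%:M, S *m S^T = 1%:M & forall a, a \in Rs -> a *m S \in Rs].

Definition complex_root (S : 'M[R]_n) (a : V) : Prop :=
  a *m S <> a /\ a *m S <> - a.

(* Weyl chambers: connected components of V minus the union of the root
   hyperplanes, i.e. the sets of vectors having the same sign pattern
   against all roots as some regular vector v. *)
Definition weyl_chamber (Rs : seq V) (C : V -> Prop) : Prop :=
  exists v : V, (forall a, a \in Rs -> dot a v != 0) /\
    (forall w, C w <-> (forall a, a \in Rs -> 0 < dot a w * dot a v)).

Definition pos_root (Rs : seq V) (C : V -> Prop) (a : V) : Prop :=
  a \in Rs /\ forall w, C w -> 0 < dot a w.

Definition neg_root (Rs : seq V) (C : V -> Prop) (a : V) : Prop :=
  a \in Rs /\ forall w, C w -> dot a w < 0.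

Definition simple_root (Rs : seq V) (C : V -> Prop) (a : V) : Prop :=
  pos_root Rs C a /\
  ~ (exists b c, [/\ pos_root Rs C b, pos_root Rs C c & a = b + c]).

Definition admissible (Rs : seq V) (Q : V -> Prop) (C : V -> Prop) : Prop :=
  forall a, pos_root Rs C a -> Q a.

Definition PhiC (Rs : seq V) (Q : V -> Prop) (C : V -> Prop) (a : V) : Prop :=
  simple_root Rs C a /\ Qn Q a.

Definition V_fit (Rs : seq V) (Q : V -> Prop) (S : 'M[R]_n) (C : V -> Prop)
  : Prop :=
  admissible Rs Q C /\
  forall a, simple_root Rs C a -> ~ PhiC Rs Q C a -> complex_root S a ->
    neg_root Rs C (a *m S).

End RootSystems.

(* Main.v *)
Require Import Defs.
From HB Require Import structures.
From mathcomp Require Import all_boot all_order all_algebra.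
From mathcomp Require Import reals.
From Stdlib Require Import Classical.
Set Implicit Arguments.
Import Order.TTheory GRing.Theory Num.Theory.
Local Open Scope ring_scope.

Section Helpers.
Variables (R : realType) (n : nat).
Local Notation V := 'rV[R]_n.

Lemma dotDl (x y w : V) : dot (x + y) w = dot x w + dot y w.
Proof. by rewrite /dot mulmxDl mxE. Qed.

Lemma dotNl (x w : V) : dot (- x) w = - dot x w.
Proof. by rewrite /dot mulNmx mxE. Qed.

Lemma dot_self_neq0 (x : V) : x != 0 -> dot x x != 0.
Proof.
move=> nz; rewrite /dot mxE.
case: (pickP (fun j => x 0 j != 0)) => [j xj | H]; last first.
  by case/eqP: nz; apply/rowP => j; rewrite mxE; apply/eqP; move: (H j) => /negbFE.
rewrite (bigD1 j) //= mxE; apply/negbT/eqP => /eqP.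
apply/negP; rewrite lt0r_neq0 //.
apply: (@lt_le_trans _ _ (x 0 j * x 0 j)).
  by rewrite -expr2 exprn_even_gt0.
rewrite lerDl; apply: sumr_ge0 => i _; rewrite mxE -expr2; exact: sqr_ge0.
Qed.

Lemma neg_in (Rs : seq V) a : root_system Rs -> a \in Rs -> - a \in Rs.
Proof.
case => _ h0 hr _ ha.
have := hr a a ha ha; rewrite /refl.
have anz : a != 0 by apply: contraNneq h0 => <-.
rewrite mulfK ?dot_self_neq0 // scaler_nat mulr2n opprD addrA subrr add0r.
done.
Qed.

Lemma mulSS (S : 'M[R]_n) (a : V) : S *m S = 1%:M -> a *m S *m S = a.
Proof. by move=> h; rewrite -mulmxA h mulmx1. Qed.

Lemma in_C (Rs : seq V) C v :
  (forall a, a \in Rs -> dot a v != 0) ->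
  (forall w, C w <-> (forall a, a \in Rs -> 0 < dot a w * dot a v)) -> C v.
Proof.
move=> hv hC; apply/hC => a ha; rewrite -expr2 exprn_even_gt0 //; exact: hv.
Qed.

Lemma dichot (Rs : seq V) C x : weyl_chamber Rs C -> x \in Rs ->
  pos_root Rs C x \/ neg_root Rs C x.
Proof.
case=> v [hv hC] hx.
have := hv x hx; rewrite neq_lt => /orP [lt0|gt0].
  right; split => // w /hC /(_ x hx); rewrite nmulr_lgt0 //.
left; split => // w /hC /(_ x hx); rewrite pmulr_lgt0 //.
Qed.

Lemma neg_pos (Rs : seq V) C x : root_system Rs -> neg_root Rs C x -> pos_root Rs C (- x).
Proof.
move=> hR [hx hn]; split; first exact: neg_in.
by move=> w /hn; rewrite dotNl oppr_gt0.
Qed.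

Lemma pos_neg (Rs : seq V) C x : root_system Rs -> pos_root Rs C x -> neg_root Rs C (- x).
Proof.
move=> hR [hx hn]; split; first exact: neg_in.
by move=> w /hn; rewrite dotNl oppr_lt0.
Qed.

Lemma count_lt (s : seq V) (P P' : pred V) x :
  (forall y, P y -> P' y) -> x \in s -> P' x -> ~~ P x -> (count P s < count P' s)%N.
Proof.
move=> sub; elim: s => //= y s IH; rewrite in_cons => /orP [/eqP <-|xs] Px nPx.
  rewrite Px (negbTE nPx) /= add0n add1n ltnS; apply: sub_count => z; exact: sub.
case: (boolP (P y)) => Py; first by rewrite (sub _ Py) /= ltn_add2l IH.
rewrite /= add0n; apply: (leq_trans (IH xs Px nPx)); exact: leq_addl.
Qed.

Lemma pos_ind (Rs : seq V) C (P : V -> Prop) : weyl_chamber Rs C ->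
  (forall z, simple_root Rs C z -> P z) ->
  (forall b c, pos_root Rs C b -> pos_root Rs C c -> pos_root Rs C (b + c) ->
     P b -> P c -> P (b + c)) ->
  forall z, pos_root Rs C z -> P z.
Proof.
move=> hW hS hstep.
have [v [hv hC]] : exists v, _ := hW.
have vC := @in_C Rs C v hv hC.
suff: forall k z, (count (fun x => (dot x v < dot z v)%R) Rs < k)%N -> pos_root Rs C z -> P z.
  by move=> h z; apply: (h _ z (ltnSn _)).
elim=> // k IH z; rewrite ltnS => hk hz.
case: (classic (exists b c, [/\ pos_root Rs C b, pos_root Rs C c & z = b + c])); last first.
  by move=> hn; apply: hS.
move=> [b [c [hb hc Ez]]]; subst z.
have bv := proj2 hb v vC; have cv := proj2 hc v vC.
have lt_b : dot b v < dot (b + c) v by rewrite dotDl ltrDl.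
have lt_c : dot c v < dot (b + c) v by rewrite dotDl ltrDr.
apply: hstep => //.
  apply: (IH b) => //; apply: (leq_trans _ hk); apply: (@count_lt _ _ _ b).
  - by move=> y /= hy; apply: lt_trans hy lt_b.
  - exact: hb.1.
  - done.
  - by rewrite /= ltxx.
apply: (IH c) => //; apply: (leq_trans _ hk); apply: (@count_lt _ _ _ c).
- by move=> y /= hy; apply: lt_trans hy lt_c.
- exact: hc.1.
- done.
- by rewrite /= ltxx.
Qed.

End Helpers.

Theorem mainTheorem10 (R : realType) (n : nat) (Rs : seq 'rV[R]_n)
  (Q : 'rV[R]_n -> Prop) (S : 'M[R]_n) (C : 'rV[R]_n -> Prop) :
  root_system Rs -> reduced Rs -> parabolic Rs Q -> root_involution Rs S ->
  weyl_chamber Rs C -> V_fit Rs Q S C ->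
  [<-> (forall a, a \in Rs -> Q a \/ exists b, Q b /\ a = b *m S);
       (forall a, Qn Q a -> neg_root Rs C (a *m S));
       (forall a, PhiC Rs Q C a -> neg_root Rs C (a *m S))].
Proof.
move=> hR _ [[hQin hQcl] hQpar] [hSS _ hSR] hW [hadm hfit].
have negQ : forall x, neg_root Rs C x -> Q (- x).
  by move=> x hx; apply: hadm; apply: neg_pos.
have base : forall z, simple_root Rs C z -> ~ PhiC Rs Q C z -> Q (- (z *m S)).
  move=> z hz hnP.
  case: (classic (complex_root S z)) => [hc|hnc].
    by apply: negQ; apply: hfit.
  have Qz : Q z by apply: hadm; exact: hz.1.
  case: (classic (z *m S = z)) => [->|h1].
    apply: NNPP => hn; apply: hnP; split => //.
  case: (classic (z *m S = - z)) => [->|h2]; first by rewrite opprK.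
  by case: hnc; split.
have step : forall b c, pos_root Rs C (b + c) -> Q (- (b *m S)) -> Q (- (c *m S)) ->
    Q (- ((b + c) *m S)).
  move=> b c hbc hb hc; rewrite mulmxDl opprD; apply: hQcl => //.
  rewrite -opprD -mulmxDl; apply: neg_in => //; apply: hSR; exact: hbc.1.
tfae.
- move=> h1 a [Qa nQa].
  have aR := hQin a Qa.
  have aSR := hSR a aR.
  case: (@dichot _ _ _ _ _ hW aSR) => // hpos; exfalso.
  have QnaS : Q (- (a *m S)).
    case: (h1 (- a) (@neg_in _ _ _ _ hR aR)) => [//|[b [Qb Eb]]].
    have -> : - (a *m S) = b by rewrite -mulNmx Eb mulSS.
    done.
  have G : forall z, pos_root Rs C z -> Q (- z) -> Q (- (z *m S)).
    apply: (pos_ind (fun z => Q (- z) -> Q (- (z *m S))) hW) => //.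
      move=> z hz hQz; apply: base => // -[_ [_ nq]]; exact: nq hQz.
    move=> b c hb hc hbc Pb Pc hQ.
    have eb : - (b + c) + c = - b by rewrite opprD subrK.
    have ec : - (b + c) + b = - c by rewrite opprD addrAC addNr add0r.
    apply: step => //.
      apply: Pb; rewrite -eb; apply: hQcl => //; first exact: hadm.
      by rewrite eb; apply: neg_in => //; exact: hb.1.
    apply: Pc; rewrite -ec; apply: hQcl => //; first exact: hadm.
    by rewrite ec; apply: neg_in => //; exact: hc.1.
  by apply: nQa; have := G _ hpos QnaS; rewrite mulSS.
- by move=> h2 a [_ hq]; exact: h2.
- move=> h3.
  have G : forall z, pos_root Rs C z -> Q (- (z *m S)).
    apply: (pos_ind (fun z => Q (- (z *m S))) hW) => //.
      move=> z hz; case: (classic (PhiC Rs Q C z)) => hp.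
        by apply: negQ; apply: h3.
      exact: base.
    by move=> b c hb hc hbc Pb Pc; apply: step.
  have h2 : forall a, Qn Q a -> neg_root Rs C (a *m S).
    move=> a [Qa nQa].
    have aSR := hSR a (hQin a Qa).
    case: (@dichot _ _ _ _ _ hW aSR) => // hpos; exfalso.
    by apply: nQa; have := G _ hpos; rewrite mulSS.
  move=> a aR; case: (classic (Q a)) => [|nQa]; first by left.
  right.
  have Qna : Q (- a) by case: (hQpar a aR).
  have hq : Qn Q (- a) by split; rewrite ?opprK.
  have hn := h2 _ hq.
  exists (a *m S); split; last by rewrite mulSS.
  apply: hadm; have := @neg_pos _ _ _ _ _ hR hn; by rewrite mulNmx opprK.
Qed.
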